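(* For any $a,b\in\mathbb{N}$, the closure of the arithmetic progression $a+b\mathbb{N}_0$ in the Kirch space $(\mathbb{N},\tau_K)$ equals $\mathbb{N}\cap\bigcap_{p\in\Pi_b}\big(\{0,a\}+p\mathbb{Z}\big)$.
   Context: $\mathbb{N}=\{1,2,3,\dots\}$, $\mathbb{N}_0=\{0\}\cup\mathbb{N}$, $a+b\mathbb{N}_0=\{a+bn:n\in\mathbb{N}_0\}$. For $x\in\mathbb{N}$, $\Pi_x$ is the set of prime divisors of $x$. For sets $S,T$ of integers, $S+T=\{s+t:s\in S,t\in T\}$; so $\{0,a\}+p\mathbb{Z}=p\mathbb{Z}\cup(a+p\mathbb{Z})$. The Kirch topology $\tau_K$ on $\mathbb{N}$ is generated by the base of all $a+b\mathbb{N}_0$ with $a,b\in\mathbb{N}$ coprime and $b$ square-free (not divisible by the square of a prime). *)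

(* Defs.v *)
From mathcomp Require Import all_boot.
Set Implicit Arguments. Unset Strict Implicit. Unset Printing Implicit Defensive.

(* Subsets of nat are predicates nat -> Prop.  The space is N = {1,2,...},
   i.e. the elements x with 0 < x. *)
Definition natset := nat -> Prop.

Definition inN : natset := fun x => 0 < x.

Definition squarefree (b : nat) : Prop :=
  forall p, prime p -> ~~ (p * p %| b).

Definition AP (a b : nat) : natset := fun n => exists k, n = a + b * k.

Definition kirch_basic (a b : nat) : Prop :=
  [/\ 0 < a, 0 < b, coprime a b & squarefree b].

Definition kirch_open (U : natset) : Prop :=
  (forall x, U x -> inN x) /\
  (forall x, U x -> exists a b, [/\ kirch_basic a b, AP a b x &
                                    forall y, AP a b y -> U y]).

Definition kirch_closure (A : natset) : natset :=
  fun x => inN x /\ forall U, kirch_open U -> U x -> exists y, U y /\ A y.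

Definition rhs_set (a b : nat) : natset :=
  fun x => inN x /\ forall p, prime p -> p %| b -> (p %| x) \/ (x = a %[mod p]).

(* Main.v *)
Require Import Defs.
From mathcomp Require Import all_boot zify.

Lemma modn_dvd_eq d m u v : d %| m -> u = v %[mod m] -> u = v %[mod d].
Proof. by move=> dm E; rewrite -(modn_dvdm u dm) E modn_dvdm. Qed.
Arguments modn_dvd_eq {d m u v}.

Lemma ap_mod a b l : a + b * l = a %[mod b].
Proof. by rewrite addnC mulnC modnMDl. Qed.

Lemma key n m : 0 < m -> squarefree m -> forall x a b, 0 < b ->
  (forall p, prime p -> p %| m -> p %| b -> x = a %[mod p]) ->
  exists y, [/\ n <= y, y = x %[mod m] & y = a %[mod b]].
Proof.
elim: m {-2}m (leqnn m) => [|M IH] m Hm m0 sqm x a b b0 H.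
  by rewrite leqn0 in Hm; rewrite (eqP Hm) in m0.
have [m1|m1] := leqP m 1.
  have -> : m = 1 by lia.
  exists (a + b * n); split; first by nia.
    by rewrite !modn1.
  by rewrite addnC mulnC modnMDl.
set p := pdiv m; have pp : prime p by apply: pdiv_prime.
set h := m %/ p.
have mph : m = p * h by rewrite /h mulnC divnK // pdiv_dvd.
have p1 : 1 < p by apply: prime_gt1.
have h0 : 0 < h by move: m0; rewrite mph muln_gt0 => /andP[].
have hM : h <= M.
  by have := ltn_Pmull p1 h0; rewrite -mph => hm; rewrite -ltnS (leq_trans hm Hm).
have sqh : squarefree h.
  move=> q qp; apply/negP=> qh; move: (sqm q qp); rewrite mph.
  by rewrite (dvdn_mull _ qh).
have cph : coprime p h.
  rewrite prime_coprime //; apply/negP=> ph; move: (sqm p pp).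
  by rewrite mph dvdn_pmul2l ?ph // prime_gt0.
have [y0 [ny0 y0x y0a]] : exists y, [/\ n <= y, y = x %[mod h] & y = a %[mod b]].
  apply: IH => // q qp qh qb; apply: H => //.
  by rewrite mph dvdn_mull.
have [pb|pb] := boolP (p %| b).
  exists y0; split => //.
  apply/eqP; rewrite mph chinese_remainder // y0x eqxx andbT.
  rewrite (modn_dvd_eq pb y0a).
  have -> : x = a %[mod p] by apply: H => //; rewrite mph dvdn_mulr.
  by [].
have cpbh : coprime p (b * h) by rewrite coprimeMr cph prime_coprime // pb.
pose z := chinese p (b * h) x y0.
have zx : z = x %[mod p] by apply: chinese_modl.
have zy : z = y0 %[mod b * h] by apply: chinese_modr.
exists (z + p * (b * h) * n); split.
- have P0 : 0 < p * (b * h) by rewrite !muln_gt0 b0 h0 prime_gt0.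
  exact: leq_trans (leq_pmull n P0) (leq_addl _ _).
- apply/eqP; rewrite mph chinese_remainder //; apply/andP; split.
    by rewrite -mulnA ap_mod zx.
  rewrite -y0x; apply/eqP; apply: (modn_dvd_eq (dvdn_mull b (dvdnn h))).
  by rewrite (mulnC p) -mulnA ap_mod zy.
- rewrite -y0a; apply: (modn_dvd_eq (dvdn_mulr h (dvdnn b))).
  by rewrite (mulnC p) -mulnA ap_mod zy.
Qed.

Lemma sqfree_prime p : prime p -> squarefree p.
Proof.
move=> pp q qp; apply/negP => qq.
have p1 := prime_gt1 pp; have q1 := prime_gt1 qp.
have qd : q %| p by apply: dvdn_trans qq; apply: dvdn_mulr.
case/primeP: pp => _ /(_ _ qd) /orP[/eqP q1'|/eqP qe]; first by lia.
subst q; have := dvdn_leq (ltnW p1) qq; nia.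
Qed.


Theorem lemma3p1 (a b : nat) : 0 < a -> 0 < b ->
  forall x : nat, kirch_closure (AP a b) x <-> rhs_set a b x.
Proof.
move=> a0 b0 x; split.
- move=> [x0 H]; split => // p pp pb.
  have [px|px] := boolP (p %| x); [by left | right].
  set r := x %% p.
  have r0 : 0 < r by rewrite lt0n; move: px; rewrite /dvdn.
  have p0 := prime_gt0 pp.
  have Uo : kirch_open (AP r p).
    split; first by move=> y [k ->]; rewrite /inN; lia.
    move=> y Uy; exists r, p; split => //.
    split => //; last by apply: sqfree_prime.
    by rewrite coprime_modl coprime_sym prime_coprime.
  have Ux : AP r p x by exists (x %/ p); rewrite {1}(divn_eq x p) mulnC addnC.
  have [y [[k yk] [l yl]]] := H _ Uo Ux.
  have e1 : y = a %[mod p].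
    by rewrite yl; apply: (modn_dvd_eq pb); apply: ap_mod.
  by rewrite -e1 yk ap_mod /r modn_mod.
- move=> [x0 H]; split => // U [_ Uo] Ux.
  have [a' [b' [[a'0 b'0 cab sqb] [k xk] sub]]] := Uo x Ux.
  have [y [ny yx ya]] : exists y, [/\ x + a <= y, y = x %[mod b'] & y = a %[mod b]].
    apply: key => // q qp qb' qb.
    case: (H q qp qb) => // qx; exfalso.
    have qa' : q %| a'.
      by move: qx; rewrite xk dvdn_addl // dvdn_mulr.
    have : q %| gcdn a' b' by rewrite dvdn_gcd qa' qb'.
    rewrite (eqP cab) dvdn1 => /eqP q1; rewrite q1 in qp; done.
  exists y; split.
    apply: sub.
    have : b' %| y - x by rewrite -eqn_mod_dvd ?yx //; lia.
    move/divnK => E; exists (k + (y - x) %/ b'); lia.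
  have : b %| y - a by rewrite -eqn_mod_dvd ?ya //; lia.
  move/divnK => E; exists ((y - a) %/ b); lia.
Qed.
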